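(* Define $f:\mathbb{Z}_{\ge 1}\to\mathbb{R}$ by $f(1)=1$, $f(2)=f(3)=2$, and for $n \ge 4$: $f(n)=4\cdot 3^{n/5-1}$ if $n\equiv 0 \pmod 5$; $f(n)=5\cdot 3^{(n-6)/5}$ if $n\equiv 1 \pmod 5$; $f(n)=2\cdot 3^{(n-2)/5}$ if $n\equiv 2 \pmod 5$; $f(n)=8\cdot 3^{(n-8)/5}$ if $n\equiv 3 \pmod 5$; $f(n)=3^{(n+1)/5}$ if $n\equiv 4 \pmod 5$. Then: (a) for all integers $n,m \ge 2$ with $(n,m)\neq(3,3)$, $f(n)f(m) \ge f(n+m)$; and (b) for all integers $n,m \ge 5$, $f(n-1)f(m-1) \ge f(n+m-1)$. *)

(* Defs.v *)
From Stdlib Require Import Reals Arith Lia Lra.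
Open Scope R_scope.

(* On n = 0 (outside the domain) we set f 0 = 0;
   this value is never used by the theorem. For n >= 4 each exponent below is a
   natural number (the numerator is divisible by 5), so nat division is exact. *)
Definition fpaper (n : nat) : R :=
  match n with
  | 0%nat => 0
  | 1%nat => 1
  | 2%nat => 2
  | 3%nat => 2
  | _ =>
    match (n mod 5)%nat with
    | 0%nat => 4 * 3 ^ (n / 5 - 1)
    | 1%nat => 5 * 3 ^ ((n - 6) / 5)
    | 2%nat => 2 * 3 ^ ((n - 2) / 5)
    | 3%nat => 8 * 3 ^ ((n - 8) / 5)
    | _ => 3 ^ ((n + 1) / 5)
    end
  end.

(* Main.v *)
Require Import Defs.
From Stdlib Require Import Reals Arith Lia Lra.
Open Scope R_scope.

Ltac dm x := pose proof (Nat.div_mod_eq x 5); pose proof (Nat.mod_upper_bound x 5 ltac:(lia)).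

Lemma shift : forall n, (4<=n)%nat -> fpaper (n+5) = 3 * fpaper n.
Proof.
intros n H. destruct n as [|[|[|[|k]]]]; try lia.
replace (S(S(S(S k))) + 5)%nat with (S(S(S(S (k+5)))))%nat by lia.
cbv beta iota delta [fpaper].
set (x := S(S(S(S k)))). set (y := S(S(S(S (k+5))))).
assert (Hy : y = (x+5)%nat) by (unfold x, y; lia). assert (Hx : (4 <= x)%nat) by (unfold x; lia). clearbody x y.
dm x. dm y.
dm (x-6)%nat. dm (y-6)%nat. dm (x-2)%nat. dm (y-2)%nat. dm (x-8)%nat. dm (y-8)%nat.
dm (x+1)%nat. dm (y+1)%nat.
replace (y mod 5)%nat with (x mod 5)%nat by lia.
destruct (x mod 5)%nat as [|[|[|[|[|?]]]]] eqn:E.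
- replace (y/5 - 1)%nat with (S (x/5 - 1))%nat by lia.
  simpl pow; ring.
- replace ((y - 6)/5)%nat with (S ((x - 6)/5))%nat by lia.
  simpl pow; ring.
- replace ((y - 2)/5)%nat with (S ((x - 2)/5))%nat by lia.
  simpl pow; ring.
- replace ((y - 8)/5)%nat with (S ((x - 8)/5))%nat by lia.
  simpl pow; ring.
- replace ((y + 1)/5)%nat with (S ((x + 1)/5))%nat by lia.
  simpl pow; ring.
- lia.
Qed.

Lemma ind5 (P : nat -> Prop) :
  (forall n, (4<=n<=8)%nat -> P n) -> (forall n, (4<=n)%nat -> P n -> P (n+5)%nat) ->
  forall n, (4<=n)%nat -> P n.
Proof.
intros B S n. induction n as [n IH] using lt_wf_ind. intros Hn.
destruct (Nat.le_gt_cases n 8).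
- apply B; lia.
- replace n with ((n-5)+5)%nat by lia. apply S; [lia|]. apply IH; lia.
Qed.

Ltac base := intros ? ?;
  match goal with H : (4 <= ?m <= 8)%nat |- _ =>
    assert (m = 4 \/ m = 5 \/ m = 6 \/ m = 7 \/ m = 8)%nat as Hc by lia;
    destruct Hc as [->|[->|[->|[->| ->]]]] end;
  simpl; lra.

Lemma fpos : forall n, (1 <= n)%nat -> 0 < fpaper n.
Proof.
intros n Hn. destruct n as [|[|[|[|k]]]]; try lia; try (simpl; lra).
cbv beta iota delta [fpaper].
destruct (S(S(S(S k))) mod 5)%nat as [|[|[|[|[|?]]]]];
  try (apply Rmult_lt_0_compat; [lra|]); apply pow_lt; lra.
Qed.

Lemma stepA : forall n m, (4<=n)%nat -> (4<=m)%nat ->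
  fpaper n * fpaper m >= fpaper (n+m) ->
  fpaper (n+5) * fpaper m >= fpaper (n+5+m).
Proof.
intros n m Hn Hm H. rewrite shift by lia.
replace (n+5+m)%nat with ((n+m)+5)%nat by lia. rewrite shift by lia. nra.
Qed.

Lemma stepB : forall n m, (4<=n)%nat -> (4<=m)%nat ->
  fpaper n * fpaper m >= fpaper (n+m+1) ->
  fpaper (n+5) * fpaper m >= fpaper (n+5+m+1).
Proof.
intros n m Hn Hm H. rewrite shift by lia.
replace (n+5+m+1)%nat with ((n+m+1)+5)%nat by lia. rewrite shift by lia. nra.
Qed.

Lemma A44 : forall n m, (4<=n)%nat -> (4<=m)%nat -> fpaper n * fpaper m >= fpaper (n+m).
Proof.
intros n m Hn Hm. revert n Hn.
apply ind5 with (P := fun n => fpaper n * fpaper m >= fpaper (n+m)).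
- intros n Hnn. revert m Hm.
  apply ind5 with (P := fun m => fpaper n * fpaper m >= fpaper (n+m)).
  + intros m Hmm.
    assert (n = 4 \/ n = 5 \/ n = 6 \/ n = 7 \/ n = 8)%nat as Hc by lia;
    destruct Hc as [->|[->|[->|[->| ->]]]];
    (assert (m = 4 \/ m = 5 \/ m = 6 \/ m = 7 \/ m = 8)%nat as Hc by lia;
    destruct Hc as [->|[->|[->|[->| ->]]]]); simpl; lra.
  + intros m Hm4 IH. rewrite (Rmult_comm (fpaper n)). replace (n + (m+5))%nat with (m+5+n)%nat by lia.
    apply stepA; try lia. rewrite Rmult_comm, Nat.add_comm; exact IH.
- intros n Hn4 IH. apply stepA; lia || exact IH.
Qed.

Lemma B44 : forall n m, (4<=n)%nat -> (4<=m)%nat -> fpaper n * fpaper m >= fpaper (n+m+1).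
Proof.
intros n m Hn Hm. revert n Hn.
apply ind5 with (P := fun n => fpaper n * fpaper m >= fpaper (n+m+1)).
- intros n Hnn. revert m Hm.
  apply ind5 with (P := fun m => fpaper n * fpaper m >= fpaper (n+m+1)).
  + intros m Hmm.
    assert (n = 4 \/ n = 5 \/ n = 6 \/ n = 7 \/ n = 8)%nat as Hc by lia;
    destruct Hc as [->|[->|[->|[->| ->]]]];
    (assert (m = 4 \/ m = 5 \/ m = 6 \/ m = 7 \/ m = 8)%nat as Hc by lia;
    destruct Hc as [->|[->|[->|[->| ->]]]]); simpl; lra.
  + intros m Hm4 IH. rewrite (Rmult_comm (fpaper n)). replace (n + (m+5)+1)%nat with (m+5+n+1)%nat by lia.
    apply stepB; try lia. rewrite Rmult_comm. replace (m+n+1)%nat with (n+m+1)%nat by lia. exact IH.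
- intros n Hn4 IH. apply stepB; lia || exact IH.
Qed.

Lemma A2 : forall m, (2<=m)%nat -> fpaper 2 * fpaper m >= fpaper (2+m).
Proof.
intros m Hm. destruct (Nat.le_gt_cases m 3).
- assert (m = 2 \/ m = 3)%nat as [->| ->] by lia; simpl; lra.
- revert m Hm H. intros m _ H. assert (Hm : (4 <= m)%nat) by lia. clear H. revert m Hm.
  apply ind5 with (P := fun m => fpaper 2 * fpaper m >= fpaper (2+m)).
  + intros m Hmm. assert (m = 4 \/ m = 5 \/ m = 6 \/ m = 7 \/ m = 8)%nat as Hc by lia;
    destruct Hc as [->|[->|[->|[->| ->]]]]; simpl; lra.
  + intros m Hm4 IH. rewrite shift by lia. replace (2 + (m+5))%nat with ((2+m)+5)%nat by lia.
    rewrite shift by lia. nra.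
Qed.

Lemma A3 : forall m, (4<=m)%nat -> fpaper 3 * fpaper m >= fpaper (3+m).
Proof.
apply ind5 with (P := fun m => fpaper 3 * fpaper m >= fpaper (3+m)).
+ intros m Hmm. assert (m = 4 \/ m = 5 \/ m = 6 \/ m = 7 \/ m = 8)%nat as Hc by lia;
  destruct Hc as [->|[->|[->|[->| ->]]]]; simpl; lra.
+ intros m Hm4 IH. rewrite shift by lia. replace (3 + (m+5))%nat with ((3+m)+5)%nat by lia.
  rewrite shift by lia. nra.
Qed.

Theorem lemma4p1 :
  (forall n m : nat, (2 <= n)%nat -> (2 <= m)%nat -> ~ (n = 3%nat /\ m = 3%nat) ->
     fpaper n * fpaper m >= fpaper (n + m)) /\
  (forall n m : nat, (5 <= n)%nat -> (5 <= m)%nat ->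
     fpaper (n - 1) * fpaper (m - 1) >= fpaper (n + m - 1)).
Proof.
split.
- intros n m Hn Hm Hnm.
  destruct (Nat.le_gt_cases 4 n); destruct (Nat.le_gt_cases 4 m).
  + apply A44; lia.
  + assert (m = 2 \/ m = 3)%nat as [->| ->] by lia;
    rewrite Rmult_comm, Nat.add_comm; [apply A2 | apply A3]; lia.
  + assert (n = 2 \/ n = 3)%nat as [->| ->] by lia; [apply A2 | apply A3]; lia.
  + assert (n = 2 \/ n = 3)%nat as [->| ->] by lia.
    * apply A2; lia.
    * assert (m = 2 \/ m = 3)%nat as [->| ->] by lia; [simpl; lra | tauto].
- intros n m Hn Hm. replace (n+m-1)%nat with ((n-1)+(m-1)+1)%nat by lia.
  apply B44; lia.
Qed.
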